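(* In the standing setting below, let $2\leq\ell\leq k-2$ and let $M_k$ be the set of $k$-cycles $(x_1,\dots,x_k)\in X_1\times\dots\times X_k$ such that $(x_1,\dots,x_\ell)$ is a bad $[\ell]$-tuple, $(x_1,\dots,x_{\ell-1})$ is not a bad $[\ell-1]$-tuple, and $(x_1,\dots,x_{\ell-1},x_k)$ is not a bad $([\ell-1]\cup\{k\})$-tuple. Then for every $(x_\ell,\dots,x_{k-1})\in X_\ell\times\dots\times X_{k-1}$ there are at most $\frac12\alpha^{\ell-1}N^{\ell-1}$ $k$-cycles in $M_k$ whose coordinates $\ell,\dots,k-1$ are $x_\ell,\dots,x_{k-1}$.
   Context: Let $p$ be a fixed prime, $n\geq1$, $N=p^n$, $[m]=\{1,\dots,m\}$. For sets $X_1,\dots,X_k\subseteq\mathbb{F}_p^n$, a $k$-cycle is a tuple $(x_1,\dots,x_k)\in X_1\times\dots\times X_k$ with $x_1+\dots+x_k=0$. Standing setting: $k\geq4$, $X_1,\dots,X_k\subseteq\mathbb{F}_p^n$, the number of $k$-cycles in $X_1\times\dots\times X_k$ equals $\delta'N^{k-1}$ with $\delta'>0$, and $\theta\geq 1$ is such that for each $i\in[k]$ every point of $X_i$ occurs as $x_i$ in at most $\theta\delta'N^{k-2}$ $k$-cycles. Put $\alpha=(\theta\delta')^{1/(k-2)}$. For $I\subseteq[k]$ with $1\leq|I|\leq k-2$, an $I$-tuple is an element $(x_i)_{i\in I}\in\prod_{i\in I}X_i$; it is called bad if there are at least $2\alpha^{k-|I|-1}N^{k-|I|-1}$ $k$-cycles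 $(x_1,\dots,x_k)\in X_1\times\dots\times X_k$ whose coordinates indexed by $I$ coincide with the given tuple. *)

(* Defs.v *)
From HB Require Import structures.
From mathcomp Require Import all_boot all_order all_algebra.
Set Implicit Arguments. Unset Strict Implicit. Unset Printing Implicit Defensive.
Import Order.TTheory GRing.Theory Num.Theory.
Local Open Scope ring_scope.

(* Indices 1..k of the paper are represented by 'I_k (0-based: index i of the
   paper is the ordinal i-1).  F_p^n is 'rV['F_p]_n. *)

Definition kcycles (p n k : nat) (X : 'I_k -> {set 'rV['F_p]_n}) :
  {set {ffun 'I_k -> 'rV['F_p]_n}} :=
  [set c : {ffun 'I_k -> 'rV['F_p]_n} |
     [forall i, c i \in X i] && (\sum_(i < k) c i == 0)].

Definition ext_count (p n k : nat) (X : 'I_k -> {set 'rV['F_p]_n})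
  (I : {set 'I_k}) (y : 'I_k -> 'rV['F_p]_n) : nat :=
  #|[set c in kcycles X | [forall i in I, c i == y i]]|.

(* (y_i)_{i in I} is a bad I-tuple (only the values of y on I matter). *)
Definition is_bad (R : realFieldType) (p n k : nat)
  (X : 'I_k -> {set 'rV['F_p]_n}) (alpha : R)
  (I : {set 'I_k}) (y : 'I_k -> 'rV['F_p]_n) : bool :=
  [&& (1 <= #|I|)%N, (#|I| <= k - 2)%N,
      [forall i in I, y i \in X i] &
      2 * alpha ^+ (k - #|I| - 1) * ((p ^ n)%N)%:R ^+ (k - #|I| - 1)
        <= (ext_count X I y)%:R].

(* [m] = {1..m} as a subset of 'I_k. *)
Definition first_idx (k m : nat) : {set 'I_k} := [set i : 'I_k | (i < m)%N].

Definition first_idx_last (k m : nat) : {set 'I_k} :=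
  [set i : 'I_k | (i < m)%N || (val i == k.-1)].

Definition Mk (R : realFieldType) (p n k : nat)
  (X : 'I_k -> {set 'rV['F_p]_n}) (alpha : R) (l : nat) :
  {set {ffun 'I_k -> 'rV['F_p]_n}} :=
  [set c in kcycles X |
     [&& is_bad X alpha (first_idx k l) c,
         ~~ is_bad X alpha (first_idx k l.-1) c &
         ~~ is_bad X alpha (first_idx_last k l.-1) c]].

(* Main.v *)
Require Import Defs.
From HB Require Import structures.
From mathcomp Require Import all_boot all_order all_algebra.
From mathcomp Require Import zify ring.
Lemma sum_disj (T U : finType) (A : {set T}) (U0 : {set U}) (E : T -> {set U}) :
  (forall c, c \in A -> E c \subset U0) ->
  (forall c c' d, c \in A -> c' \in A -> d \in E c -> d \in E c' -> c = c') ->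
  \sum_(c in A) #|E c| <= #|U0|.
Proof.
move=> sub uniqE.
have -> : \sum_(c in A) #|E c| = \sum_(c in A) \sum_(d in U0) (d \in E c : nat).
  apply: eq_bigr => c cA; rewrite -sum1_card.
  rewrite (eq_bigl (fun d => (d \in U0) && (d \in E c))); last first.
    move=> d; case dE: (d \in E c); rewrite ?andbT ?andbF //.
    by rewrite (subsetP (sub c cA)).
  by rewrite big_mkcondr /=; apply: eq_bigr => d _; case: (d \in E c).
rewrite exchange_big /= -sum1_card; apply: leq_sum => d _.
have -> : \sum_(c in A) (d \in E c : nat) = \sum_(c in A | d \in E c) 1.
  by rewrite big_mkcondr /=; apply: eq_bigr => c _; case: (d \in E c).
rewrite sum1_card; apply/card_le1P => c /andP[cA dc] c'.
rewrite [LHS]unfold_in; apply/idP/idP => [/andP[c'A dc']|/eqP->]; last by rewrite cA dc.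
by apply/eqP; apply: (uniqE _ _ d).
Qed.
Import Order.TTheory GRing.Theory Num.Theory.
Local Open Scope ring_scope.

Lemma card_first_idx k l : (l <= k)%N -> #|first_idx k l| = l.
Proof.
move=> lk.
have -> : first_idx k l = [set widen_ord lk j | j in [set: 'I_l]].
  apply/setP => i; rewrite inE; apply/idP/imsetP => [il|[j _ ->]]; last by case: j.
  by exists (Ordinal il); rewrite ?inE //; apply: val_inj.
by rewrite card_imset ?cardsT ?card_ord //; move=> a b /(congr1 val) /= ?; exact: val_inj.
Qed.

Lemma kcycle_eq p n k (X : 'I_k -> {set 'rV['F_p]_n}) (c c' : {ffun 'I_k -> 'rV['F_p]_n}) (j : 'I_k) :
  c \in kcycles X -> c' \in kcycles X -> (forall i, i != j -> c i = c' i) -> c = c'.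
Proof.
rewrite !inE => /andP[_ /eqP s] /andP[_ /eqP s'] h.
apply/ffunP => i; case: (eqVneq i j) => [->|/h //].
move: s s'; rewrite (bigD1 j) //= => s; rewrite (bigD1 j) //=; move: s.
have -> : \sum_(i0 < k | i0 != j) c i0 = \sum_(i0 < k | i0 != j) c' i0.
  by apply: eq_bigr => i0 /h.
by move=> /eqP; rewrite addr_eq0 => /eqP -> /eqP; rewrite addr_eq0 => /eqP ->.
Qed.

Theorem lemma8 (R : realFieldType) (p n k l : nat)
  (X : 'I_k -> {set 'rV['F_p]_n}) (delta' theta alpha : R) :
  prime p -> (1 <= n)%N -> (4 <= k)%N ->
  #|kcycles X|%:R = delta' * ((p ^ n)%N)%:R ^+ (k - 1) ->
  0 < delta' ->
  1 <= theta ->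
  (forall (i : 'I_k) (v : 'rV['F_p]_n), v \in X i ->
     #|[set c in kcycles X | c i == v]|%:R
       <= theta * delta' * ((p ^ n)%N)%:R ^+ (k - 2)) ->
  0 <= alpha -> alpha ^+ (k - 2) = theta * delta' ->
  (2 <= l)%N -> (l <= k - 2)%N ->
  forall y : 'I_k -> 'rV['F_p]_n,
    (forall i : 'I_k, (l.-1 <= i)%N -> (i <= k - 2)%N -> y i \in X i) ->
    #|[set c in Mk X alpha l |
        [forall i : 'I_k, ((l.-1 <= i)%N && (i <= k - 2)%N) ==> (c i == y i)]]|%:R
      <= 2^-1 * alpha ^+ (l - 1) * ((p ^ n)%N)%:R ^+ (l - 1).
Proof.
move=> pp n1 k4 _ d0 t1 hth a0 aE l2 lk y hy.
set N : R := ((p ^ n)%N)%:R.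
set T := [set c in Mk X alpha l | _].
have lk' : (l.-1 < k)%N by lia.
have lk2 : (l <= k)%N by lia.
pose i0 : 'I_k := Ordinal lk'.
pose U0 := [set c in kcycles X | c i0 == y i0].
pose E c := [set d in kcycles X | [forall i in first_idx k l, d i == c i]].
have k1 : (k.-1 < k)%N by lia.
pose j : 'I_k := Ordinal k1.
have hsum : (\sum_(c in T) #|E c| <= #|U0|)%N.
  apply: sum_disj.
    move=> c; rewrite !inE => /andP[_ /forallP /(_ i0)].
    rewrite /= leqnn /= (leq_trans (leq_pred _)) // => /eqP ci0.
    apply/subsetP => d; rewrite !inE => /andP[-> /forallP /(_ i0)].
    by rewrite inE /= prednK ?leqnn // ?(leq_trans _ l2) // ci0.
  move=> c c' d /setIdP[/setIdP[cK _] /forallP fc] /setIdP[/setIdP[c'K _] /forallP fc'].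
  move=> /setIdP[_ /forallP dc] /setIdP[_ /forallP dc'].
  apply: (@kcycle_eq _ _ _ X c c' j cK c'K) => i ij.
  have ik : (i <= k - 2)%N.
    move: ij; rewrite -(inj_eq val_inj) /= => /eqP ij; have := ltn_ord i; lia.
  case: (ltnP i l) => il.
    have := dc i; have := dc' i; rewrite !inE il /= => /eqP <- /eqP <- //.
  have := fc i; have := fc' i; rewrite ik (leq_trans (leq_pred _) il) /=.
  by move=> /eqP -> /eqP ->.
have hU : #|U0|%:R <= (alpha * N) ^+ (k - 2).
  rewrite exprMn aE; apply: hth; apply: hy => /=; lia.
have hE : forall c, c \in T -> 2 * (alpha * N) ^+ (k - l - 1) <= #|E c|%:R.
  move=> c /setIdP[/setIdP[_ /and3P[/and4P[_ _ _ hb] _ _]] _].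
  by move: hb; rewrite card_first_idx // exprMn mulrA.
have Npos : 0 < N by rewrite ltr0n expn_gt0 prime_gt0.
have apos : 0 < alpha.
  rewrite lt0r a0 andbT; apply/eqP => a00; move: aE; rewrite a00 expr0n.
  have -> : (k - 2 == 0)%N = false by apply/eqP; lia.
  move=> /esym /eqP; rewrite mulf_eq0 => /orP[] /eqP h.
    by move: t1; rewrite h ler10.
  by move: d0; rewrite h ltxx.
have aNpos : 0 < alpha * N by rewrite mulr_gt0.
have ke : (k - 2 = (k - l - 1) + (l - 1))%N by lia.
move: hU; rewrite ke exprD => hU.
set a := (alpha * N) ^+ (k - l - 1) in hE hU.
have a0' : 0 < a by rewrite exprn_gt0.
have h1 : #|T|%:R * (2 * a) <= a * (alpha * N) ^+ (l - 1).
  apply: le_trans hU; apply: le_trans (_ : (\sum_(c in T) #|E c|)%:R <= _); last first.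
    by rewrite ler_nat.
  rewrite natr_sum mulr_natl -sumr_const.
  by apply: ler_sum => c cT; apply: hE.
have ge : 2^-1 * alpha ^+ (l - 1) * N ^+ (l - 1) = (a * (alpha * N) ^+ (l - 1)) / (2 * a).
  by rewrite exprMn; field; rewrite ?lt0r_neq0 // pnatr_eq0.
by rewrite ge ler_pdivlMr // mulr_gt0.
Qed.
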